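(* There is a sequence of positive numbers $(a_k)_{k\ge1}$ with $\sum_{k=1}^\infty a_k<\infty$ such that $\mathbb E(U_k)\le a_k$ for every $n\ge 2k$ and every $p\ge 2/5$, where $U_k$ is the number of proper star $k$-separations of $\Gamma\in G(n,p)$.
   Context: $G(n,p)$ is the Erdős–Rényi random graph on vertex set $V$, $|V|=n$, each edge independently present with probability $p$. For a graph $\Delta$ with vertex set $W$, a separation is $S\subset W$ with $S\ne\varnothing$, $S\ne W$ and no edges between $S$ and $W\setminus S$. $\mathrm{st}(a)$ is $a$ with its neighbours. A star separation of $\Gamma$ is a pair $(a,S)$ with $a\in V$, $S\subset V\setminus\mathrm{st}(a)$, such that $S$ is a separation of the full subgraph $\Gamma\setminus\mathrm{st}(a)$; it is a star $k$-separation if $|S|=k$, and proper if $S$ is not a separation of $\Gamma$. *)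

(* Defs.v *)
From HB Require Import structures.
From mathcomp Require Import all_boot all_order all_algebra.
Set Implicit Arguments. Unset Strict Implicit. Unset Printing Implicit Defensive.
Import Order.TTheory GRing.Theory Num.Theory.
Local Open Scope ring_scope.

(* A simple graph on the vertex set 'I_n is given by its edge set
   E : {set {set 'I_n}}; only 2-element sets count as edges. *)
Definition pairs (n : nat) : {set {set 'I_n}} := [set e : {set 'I_n} | #|e| == 2%N].

Definition adj n (E : {set {set 'I_n}}) (x y : 'I_n) : bool :=
  (x != y) && ([set x; y] \in E).

Definition star n (E : {set {set 'I_n}}) (a : 'I_n) : {set 'I_n} :=
  [set x | (x == a) || adj E a x].

Definition is_sep n (E : {set {set 'I_n}}) (W S : {set 'I_n}) : bool :=
  [&& S \subset W, S != set0, S != W &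
      [forall x in S, forall y in W :\: S, ~~ adj E x y]].

Definition star_sep n (E : {set {set 'I_n}}) (a : 'I_n) (S : {set 'I_n}) : bool :=
  (S \subset ~: star E a) && is_sep E (~: star E a) S.

Definition proper_star_ksep n (E : {set {set 'I_n}}) (k : nat) (a : 'I_n)
    (S : {set 'I_n}) : bool :=
  [&& star_sep E a S, #|S| == k & ~~ is_sep E [set: 'I_n] S].

Definition U n (k : nat) (E : {set {set 'I_n}}) : nat :=
  #|[set aS : 'I_n * {set 'I_n} | proper_star_ksep E k aS.1 aS.2]|.

Definition gnp_prob (R : numDomainType) n (p : R) (E : {set {set 'I_n}}) : R :=
  \prod_(e in pairs n) (if e \in E then p else 1 - p).

Definition gnp_expect (R : numDomainType) n (p : R)
    (X : {set {set 'I_n}} -> R) : R :=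
  \sum_(E : {set {set 'I_n}} | E \subset pairs n) gnp_prob p E * X E.

(* Main.v *)
Require Import Defs.
From HB Require Import structures.
From mathcomp Require Import all_boot all_order all_algebra.
From mathcomp Require Import all_classical all_reals all_analysis.
Import Order.TTheory GRing.Theory Num.Theory numFieldNormedType.Exports.
Local Open Scope ring_scope.
Local Open Scope classical_set_scope.

From mathcomp Require Import ring lra zify.
Local Close Scope classical_set_scope.
Set Implicit Arguments. Unset Strict Implicit.

Lemma split_sum (R : nmodType) (T : finType) (Q : {set T}) (e : T)
  (F : {set T} -> R) : e \in Q ->
  \sum_(E : {set T} | E \subset Q) F E = \sum_(E : {set T} | E \subset Q :\ e) (F (e |: E) + F E).
Proof.
move=> eQ; rewrite big_split /= [LHS](bigID (fun E : {set T} => e \in E)) /=.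
congr (_ + _); last by apply: eq_bigl => E; rewrite subsetD1.
rewrite (reindex_onto (fun E => e |: E) (fun E => E :\ e)) /=; last first.
  by move=> i /andP[_ ?]; rewrite finset.setD1K.
apply: eq_bigl => E; rewrite setU11 andbT subsetD1.
case: (boolP (e \in E)) => heE.
  rewrite andbF; apply/negbTE/andP => -[_ /eqP h]; move: heE.
  by rewrite -h setD11.
rewrite finset.setU1K // eqxx andbT finset.subUset finset.sub1set eQ.
by rewrite andbT.
Qed.
Definition Wt (R : numDomainType) (T : finType) (p : R) (Q E : {set T}) : R :=
  \prod_(e in Q) (if e \in E then p else 1 - p).

Definition indep (R : numDomainType) (T : finType) (e : T) (f : {set T} -> R) :=
  forall E, f (E :\ e) = f E.

Lemma subD1_notin (T : finType) (Q E : {set T}) e : E \subset Q :\ e -> e \notin E.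
Proof. by rewrite subsetD1 => /andP[]. Qed.

Lemma Wt_add (R : numDomainType) (T : finType) (p : R) (Q E : {set T}) e :
  e \in Q -> e \notin E -> Wt p Q (e |: E) = p * Wt p (Q :\ e) E.
Proof.
move=> eQ eE; rewrite /Wt (bigD1 e) //= setU11; congr (_ * _).
apply: eq_big => i; first by rewrite in_setD1 andbC.
by move=> /andP[_ ie]; rewrite in_setU1 (negbTE ie).
Qed.

Lemma Wt_rem (R : numDomainType) (T : finType) (p : R) (Q E : {set T}) e :
  e \in Q -> e \notin E -> Wt p Q E = (1 - p) * Wt p (Q :\ e) E.
Proof.
move=> eQ eE; rewrite /Wt (bigD1 e) //= (negbTE eE); congr (_ * _).
by apply: eq_bigl => i; rewrite in_setD1 andbC.
Qed.

Lemma indepU (R : numDomainType) (T : finType) e (f : {set T} -> R) (E : {set T}) :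
  indep e f -> e \notin E -> f (e |: E) = f E.
Proof. by move=> hf eE; rewrite -hf finset.setU1K. Qed.

Lemma L1a (R : numDomainType) (T : finType) (p : R) (Q : {set T}) e
  (f : {set T} -> R) : e \in Q -> indep e f ->
  \sum_(E : {set T} | E \subset Q) Wt p Q E * f E =
  \sum_(E : {set T} | E \subset Q :\ e) Wt p (Q :\ e) E * f E.
Proof.
move=> eQ hf; rewrite (split_sum _ eQ); apply: eq_bigr => E /subD1_notin eE.
rewrite (Wt_add p eQ eE) (Wt_rem p eQ eE) indepU //.
by rewrite -!mulrA -mulrDl (addrC p) subrK mul1r.
Qed.

Lemma L1out (R : numDomainType) (T : finType) (p : R) (Q : {set T}) e
  (f : {set T} -> R) : e \in Q -> indep e f ->
  \sum_(E : {set T} | E \subset Q) Wt p Q E * ((e \notin E)%:R * f E) =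
  (1 - p) * \sum_(E : {set T} | E \subset Q) Wt p Q E * f E.
Proof.
move=> eQ hf; rewrite (L1a p eQ hf) (split_sum _ eQ) mulr_sumr.
apply: eq_bigr => E /subD1_notin eE.
by rewrite setU11 /= mul0r mulr0 add0r eE mul1r (Wt_rem p eQ eE) mulrA.
Qed.

Lemma L1in (R : numDomainType) (T : finType) (p : R) (Q : {set T}) e
  (f : {set T} -> R) : e \in Q -> indep e f ->
  \sum_(E : {set T} | E \subset Q) Wt p Q E * ((e \in E)%:R * f E) =
  p * \sum_(E : {set T} | E \subset Q) Wt p Q E * f E.
Proof.
move=> eQ hf; rewrite (L1a p eQ hf) (split_sum _ eQ) mulr_sumr.
apply: eq_bigr => E /subD1_notin eE.
by rewrite setU11 /= (negbTE eE) mul0r mulr0 addr0 mul1r (Wt_add p eQ eE) indepU // mulrA.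
Qed.
Lemma mass (R : numDomainType) (T : finType) (p : R) (Q : {set T}) :
  \sum_(E : {set T} | E \subset Q) Wt p Q E = 1.
Proof.
move: {2}#|Q| (leqnn #|Q|) => m; elim: m Q => [|m IH] Q hQ.
  have -> : Q = finset.set0 by apply/eqP; rewrite -cards_eq0 -leqn0.
  rewrite (eq_bigl (pred1 finset.set0)) ?big_pred1_eq /Wt ?big_set0 //.
  by move=> E; rewrite finset.subset0.
case: (finset.set_0Vmem Q) => [->|[e eQ]].
  rewrite (eq_bigl (pred1 finset.set0)) ?big_pred1_eq /Wt ?big_set0 //.
  by move=> E; rewrite finset.subset0.
have h := @L1a R T p Q e (fun _ => 1) eQ (fun _ => erefl).
rewrite (eq_bigr (fun E => Wt p Q E * 1)); last by move=> *; rewrite mulr1.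
rewrite h (eq_bigr (fun E => Wt p (Q :\ e) E)); last by move=> *; rewrite mulr1.
apply: IH; move: hQ; rewrite (cardsD1 e Q) eQ /=. by [].
Qed.

Lemma indep_notin (R : numDomainType) (T : finType) (e e' : T) :
  e' != e -> indep e (fun E : {set T} => (e' \notin E)%:R : R).
Proof. by move=> h E; rewrite in_setD1 h. Qed.

Lemma indep_in (R : numDomainType) (T : finType) (e e' : T) :
  e' != e -> indep e (fun E : {set T} => (e' \in E)%:R : R).
Proof. by move=> h E; rewrite in_setD1 h. Qed.

Lemma indep_mul (R : numDomainType) (T : finType) (e : T) (f g : {set T} -> R) :
  indep e f -> indep e g -> indep e (fun E => f E * g E).
Proof. by move=> hf hg E; rewrite hf hg. Qed.

Lemma indep_add (R : numDomainType) (T : finType) (e : T) (f g : {set T} -> R) :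
  indep e f -> indep e g -> indep e (fun E => f E + g E).
Proof. by move=> hf hg E; rewrite hf hg. Qed.

Lemma indep_prod (R : numDomainType) (T : finType) (I : eqType) (r : seq I)
  (e : T) (F : I -> {set T} -> R) :
  (forall i, i \in r -> indep e (F i)) -> indep e (fun E => \prod_(i <- r) F i E).
Proof. by move=> h E; apply: eq_big_seq => i /h. Qed.

Lemma indep_prodS (R : numDomainType) (T : finType) (I : finType) (S : {set I})
  (e : T) (F : I -> {set T} -> R) :
  (forall i, i \in S -> indep e (F i)) -> indep e (fun E => \prod_(i in S) F i E).
Proof. by move=> h E; apply: eq_bigr => i /h. Qed.

Lemma Lprod (R : numDomainType) (T : finType) (p : R) (Q : {set T})
  (I : eqType) (r : seq I) (eps : I -> T) (f : {set T} -> R) :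
  uniq r -> {in r &, injective eps} -> (forall i, i \in r -> eps i \in Q) ->
  (forall i, i \in r -> indep (eps i) f) ->
  \sum_(E : {set T} | E \subset Q) Wt p Q E * (\prod_(i <- r) (eps i \notin E)%:R * f E)
  = (1 - p) ^+ size r * \sum_(E : {set T} | E \subset Q) Wt p Q E * f E.
Proof.
elim: r => [|i r IH] /=.
  by move=> *; rewrite expr0 mul1r; apply: eq_bigr => E _; rewrite big_nil mul1r.
move=> /andP[ir ur] inj hQ hf.
rewrite (eq_bigr (fun E => Wt p Q E * ((eps i \notin E)%:R *
   (\prod_(j <- r) (eps j \notin E)%:R * f E)))); last first.
  by move=> E _; rewrite big_cons -mulrA.
rewrite L1out; last first.
- apply: indep_mul; last by apply: hf; rewrite inE eqxx.
  apply: (@indep_prod R T I r (eps i) (fun j E => (eps j \notin E)%:R)) => j jr.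
  apply: indep_notin; apply/eqP => h.
  have ij : j = i by apply: inj; rewrite ?inE ?jr ?eqxx ?orbT.
  by move: ir; rewrite -ij jr.
- by apply: hQ; rewrite inE eqxx.
rewrite IH // ?exprS ?mulrA //.
- by move=> x y xr yr; apply: inj; rewrite inE ?xr ?yr orbT.
- by move=> j jr; apply: hQ; rewrite inE jr orbT.
- by move=> j jr; apply: hf; rewrite inE jr orbT.
Qed.
Definition Cf (R : numDomainType) (T I : finType) (S : {set I}) (e0 : T)
  (eps : I -> T) (E : {set T}) : R :=
  (e0 \in E)%:R + (e0 \notin E)%:R * \prod_(s in S) (eps s \notin E)%:R.

Lemma L2 (R : numDomainType) (T : finType) (p : R) (Q : {set T})
  (I : finType) (S : {set I}) (e0 : T) (eps : I -> T) (f : {set T} -> R) :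
  e0 \in Q -> {in S &, injective eps} -> (forall s, s \in S -> eps s \in Q) ->
  (forall s, s \in S -> eps s != e0) -> indep e0 f ->
  (forall s, s \in S -> indep (eps s) f) ->
  \sum_(E : {set T} | E \subset Q) Wt p Q E * (Cf R S e0 eps E * f E)
  = (p + (1 - p) * (1 - p) ^+ #|S|) * \sum_(E : {set T} | E \subset Q) Wt p Q E * f E.
Proof.
move=> e0Q inj epsQ epsne hf0 hf.
rewrite (eq_bigr (fun E => Wt p Q E * ((e0 \in E)%:R * f E) +
   Wt p Q E * ((e0 \notin E)%:R * (\prod_(s <- enum S) (eps s \notin E)%:R * f E))));
  last by move=> E _; rewrite /Cf big_enum /= mulrDl mulrDr -mulrA.
rewrite big_split /= L1in // L1out //; last first.
  apply: indep_mul => //.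
  apply: (@indep_prod R T I (enum S) e0 (fun j E => (eps j \notin E)%:R)) => j.
  by rewrite mem_enum => /epsne; apply: indep_notin.
rewrite Lprod; first by rewrite -cardE; ring.
- exact: enum_uniq.
- by move=> x y; rewrite !mem_enum; apply: inj.
- by move=> j; rewrite mem_enum; apply: epsQ.
- by move=> j; rewrite mem_enum; apply: hf.
Qed.

Definition inB (T I J : finType) (S : {set I}) (e0 : J -> T) (eps : J -> I -> T)
  (x : J) (e : T) : bool := (e == e0 x) || [exists s in S, e == eps x s].

Lemma Cf_indep (R : numDomainType) (T I J : finType) (S : {set I}) (e0 : J -> T)
  (eps : J -> I -> T) x e : ~~ inB S e0 eps x e -> indep e (Cf R S (e0 x) (eps x)).
Proof.
rewrite /inB negb_or => /andP[h1 /existsPn h2].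
apply: indep_add; first by apply: indep_in; rewrite eq_sym.
apply: indep_mul; first by apply: indep_notin; rewrite eq_sym.
apply: (@indep_prodS R T I S e (fun j E => (eps x j \notin E)%:R)) => s sS.
by apply: indep_notin; move: (h2 s); rewrite sS /= eq_sym.
Qed.

Lemma L3 (R : numDomainType) (T : finType) (p : R) (Q : {set T})
  (I J : finType) (r : seq J) (S : {set I}) (e0 : J -> T) (eps : J -> I -> T)
  (f : {set T} -> R) :
  uniq r ->
  (forall x, x \in r -> e0 x \in Q) ->
  (forall x, x \in r -> {in S &, injective (eps x)}) ->
  (forall x s, x \in r -> s \in S -> eps x s \in Q) ->
  (forall x s, x \in r -> s \in S -> eps x s != e0 x) ->
  (forall x y e, x \in r -> y \in r -> x != y -> inB S e0 eps x e -> ~~ inB S e0 eps y e) ->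
  (forall x e, x \in r -> inB S e0 eps x e -> indep e f) ->
  \sum_(E : {set T} | E \subset Q) Wt p Q E *
     (\prod_(x <- r) Cf R S (e0 x) (eps x) E * f E)
  = (p + (1 - p) * (1 - p) ^+ #|S|) ^+ size r *
     \sum_(E : {set T} | E \subset Q) Wt p Q E * f E.
Proof.
elim: r => [|x r IH] /=.
  by move=> *; rewrite expr0 mul1r; apply: eq_bigr => E _; rewrite big_nil mul1r.
move=> /andP[xr ur] h0Q inj epsQ epsne dis hf.
have xx : x \in x :: r by rewrite inE eqxx.
have sub : forall y, y \in r -> y \in x :: r by move=> y yr; rewrite inE yr orbT.
have inB0 : inB S e0 eps x (e0 x) by rewrite /inB eqxx.
have inB1 : forall s, s \in S -> inB S e0 eps x (eps x s).
  by move=> s sS; rewrite /inB; apply/orP; right; apply/existsP; exists s; rewrite sS eqxx.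
have hind : forall e, inB S e0 eps x e ->
    indep e (fun E => \prod_(y <- r) Cf R S (e0 y) (eps y) E * f E).
  move=> e he; apply: indep_mul; last by apply: (hf x).
  apply: (@indep_prod R T J r e (fun y E => Cf R S (e0 y) (eps y) E)) => y yr.
  apply: Cf_indep; apply: (dis x) => //; first by apply: sub.
  by apply/eqP => exy; move: xr; rewrite exy yr.
rewrite (eq_bigr (fun E => Wt p Q E * (Cf R S (e0 x) (eps x) E *
   (\prod_(y <- r) Cf R S (e0 y) (eps y) E * f E)))); last first.
  by move=> E _; rewrite big_cons -mulrA.
rewrite L2 //; first last.
- by move=> s sS; apply: hind; apply: inB1.
- by apply: hind.
- by move=> s sS; apply: epsne.
- by move=> s sS; apply: epsQ.
- by apply: inj.
- by apply: h0Q.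
rewrite IH // ?exprS ?mulrA //.
- by move=> y yr; apply: h0Q; apply: sub.
- by move=> y yr; apply: inj; apply: sub.
- by move=> y s yr sS; apply: epsQ => //; apply: sub.
- by move=> y s yr sS; apply: epsne => //; apply: sub.
- by move=> y z e yr zr; apply: dis; apply: sub.
- by move=> y e yr; apply: hf; apply: sub.
Qed.
Lemma neqC (T : eqType) (x y : T) : x != y -> y != x.
Proof. by rewrite eq_sym. Qed.

Definition edge n (u v : 'I_n) : {set 'I_n} := [set u; v].

Lemma edge_neq n (w u v u' v' : 'I_n) :
  (w == u) || (w == v) -> w != u' -> w != v' -> edge u v != edge u' v'.
Proof.
move=> hw h1 h2; apply/eqP => h.
have : w \in edge u' v' by rewrite -h /edge !inE.
by rewrite /edge !inE (negbTE h1) (negbTE h2).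
Qed.

Lemma edge_pairs n (u v : 'I_n) : u != v -> edge u v \in pairs n.
Proof. by move=> h; rewrite /pairs inE /edge cards2 h. Qed.

Lemma edge_inj n (x s s' : 'I_n) : s != x -> edge x s = edge x s' -> s = s'.
Proof.
move=> h e; have : s \in edge x s' by rewrite -e /edge !inE eqxx orbT.
by rewrite /edge !inE (negbTE h) /= => /eqP.
Qed.

Lemma notinB (T I J : finType) (S : {set I}) (e0 : J -> T) (eps : J -> I -> T) x e :
  e != e0 x -> (forall s, s \in S -> e != eps x s) -> ~~ inB S e0 eps x e.
Proof.
move=> h1 h2; rewrite /inB negb_or h1 /=; apply/existsPn => s.
by rewrite negb_and; case sS: (s \in S) => //=; apply: h2.
Qed.

Definition Ind (R : numDomainType) n (a x0 : 'I_n) (S : {set 'I_n}) (E : {set {set 'I_n}}) : R :=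
  \prod_(s <- enum S) (edge a s \notin E)%:R *
  ((edge a x0 \notin E)%:R *
   (\prod_(s <- enum S) (edge x0 s \notin E)%:R *
    (\prod_(x <- enum ((~: (a |: S)) :\ x0)) Cf R S (edge a x) (edge x) E * 1))).

Ltac ne nS Sp := solve [ assumption | by apply: neqC | by apply: nS | by apply: neqC; apply: nS
  | by apply: Sp | by apply: neqC; apply: Sp ].

Lemma Ind_sum (R : numDomainType) n (p : R) (a x0 : 'I_n) (S : {set 'I_n}) :
  a \notin S -> x0 \in ~: (a |: S) ->
  \sum_(E : {set {set 'I_n}} | E \subset pairs n) Wt p (pairs n) E * Ind R a x0 S E
  = (1 - p) ^+ #|S| * ((1 - p) * ((1 - p) ^+ #|S| *
      ((p + (1 - p) * (1 - p) ^+ #|S|) ^+ (#|~: (a |: S)| - 1)))).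
Proof.
move=> aS x0T.
have nS : forall x s, x \notin S -> s \in S -> x != s.
  by move=> x s h sS; apply/eqP => e; move: h; rewrite e sS.
have [x0a x0S] : x0 != a /\ x0 \notin S.
  by move: x0T; rewrite !inE negb_or => /andP[].
have Tp : forall x, x \in (~: (a |: S)) :\ x0 -> [/\ x != a, x \notin S & x != x0].
  by move=> x; rewrite !inE negb_or => /and3P[].
have Sp : forall s, s \in S -> s != a.
  by move=> s sS; apply/eqP => e; move: aS; rewrite -e sS.
have hT := @L3 R _ p (pairs n) _ _ (enum ((~: (a |: S)) :\ x0)) S (edge a) (@edge n)
   (fun _ => 1) (enum_uniq _).
have indC : forall e, (forall x, x \in (~: (a |: S)) :\ x0 -> ~~ inB S (edge a) (@edge n) x e) ->
   indep e (fun E => \prod_(x <- enum ((~: (a |: S)) :\ x0)) Cf R S (edge a x) (edge x) E * 1).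
  move=> e he; apply: indep_mul => //.
  apply: (@indep_prod R _ _ _ e (fun x E => Cf R S (edge a x) (edge x) E)) => x.
  by rewrite mem_enum => /he; apply: Cf_indep.
rewrite /Ind Lprod; first last.
- move=> s; rewrite mem_enum => sS.
  apply: indep_mul; first by apply: indep_notin; apply: (@edge_neq _ x0); rewrite ?eqxx ?orbT //; ne nS Sp.
  apply: indep_mul.
    apply: (@indep_prod R _ _ _ _ (fun j E => (edge x0 j \notin E)%:R)) => j.
    by rewrite mem_enum => jS; apply: indep_notin; apply: (@edge_neq _ x0); rewrite ?eqxx ?orbT //; ne nS Sp.
  apply: indC => x /Tp [xa xS xx0]; apply: notinB.
    by apply: (@edge_neq _ s); rewrite ?eqxx ?orbT //; ne nS Sp.
  by move=> s' s'S; apply: (@edge_neq _ a); rewrite ?eqxx ?orbT //; ne nS Sp.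
- by move=> s; rewrite mem_enum => sS; apply: edge_pairs; ne nS Sp.
- by move=> s s'; rewrite !mem_enum => sS s'S; apply: edge_inj; ne nS Sp.
- exact: enum_uniq.
rewrite -cardE L1out; last first.
- apply: indep_mul.
    apply: (@indep_prod R _ _ _ _ (fun j E => (edge x0 j \notin E)%:R)) => j.
    by rewrite mem_enum => jS; apply: indep_notin; apply: (@edge_neq _ j); rewrite ?eqxx ?orbT //; ne nS Sp.
  apply: indC => x /Tp [xa xS xx0]; apply: notinB.
    by apply: (@edge_neq _ x0); rewrite ?eqxx ?orbT //; ne nS Sp.
  by move=> s' s'S; apply: (@edge_neq _ a); rewrite ?eqxx ?orbT //; ne nS Sp.
- by apply: edge_pairs; ne nS Sp.
rewrite Lprod; last first.
- move=> s; rewrite mem_enum => sS.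
  apply: indC => x /Tp [xa xS xx0]; apply: notinB.
    by apply: (@edge_neq _ x0); rewrite ?eqxx ?orbT //; ne nS Sp.
  by move=> s' s'S; apply: (@edge_neq _ x0); rewrite ?eqxx ?orbT //; ne nS Sp.
- by move=> s; rewrite mem_enum => sS; apply: edge_pairs; ne nS Sp.
- by move=> s s'; rewrite !mem_enum => sS s'S; apply: edge_inj; ne nS Sp.
- exact: enum_uniq.
rewrite hT; first last.
- by [].
- move=> x y e; rewrite !mem_enum => /Tp [xa xS xx0] /Tp [ya yS yx0] xy.
  rewrite /inB => /orP [/eqP -> | /existsP [s /andP [sS /eqP ->]]]; apply: notinB.
  + by apply: (@edge_neq _ x); rewrite ?eqxx ?orbT //; ne nS Sp.
  + by move=> s' s'S; apply: (@edge_neq _ x); rewrite ?eqxx ?orbT //; ne nS Sp.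
  + by apply: (@edge_neq _ x); rewrite ?eqxx ?orbT //; ne nS Sp.
  + by move=> s' s'S; apply: (@edge_neq _ x); rewrite ?eqxx ?orbT //; ne nS Sp.
- move=> x s; rewrite mem_enum => /Tp [xa xS xx0] sS.
  by apply: (@edge_neq _ s); rewrite ?eqxx ?orbT //; ne nS Sp.
- move=> x s; rewrite mem_enum => /Tp [xa xS xx0] sS.
  by apply: edge_pairs; ne nS Sp.
- move=> x; rewrite mem_enum => /Tp [xa xS xx0] s s' sS s'S.
  by apply: edge_inj; ne nS Sp.
- move=> x; rewrite mem_enum => /Tp [xa xS xx0].
  by apply: edge_pairs; ne nS Sp.
rewrite (eq_bigr (fun E => Wt p (pairs n) E)); last by move=> *; rewrite mulr1.
rewrite mass mulr1 -!cardE (cardsD1 x0 (~: (a |: S))) x0T add1n subn1 /=.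
by [].
Qed.
Lemma edge_sym n (u v : 'I_n) : edge u v = edge v u.
Proof. by rewrite /edge finset.setUC. Qed.

Lemma Cf_ge0 (R : numDomainType) (T I : finType) (S : {set I}) (e0 : T) eps E :
  0 <= Cf R S e0 eps E.
Proof.
rewrite /Cf; apply: addr_ge0 => //; apply: mulr_ge0 => //.
by apply: prodr_ge0 => *.
Qed.

Lemma Ind_ge0 (R : numDomainType) n (a x0 : 'I_n) S E : 0 <= Ind R a x0 S E.
Proof.
rewrite /Ind; apply: mulr_ge0; first by apply: prodr_ge0.
apply: mulr_ge0 => //; apply: mulr_ge0; first by apply: prodr_ge0.
rewrite mulr1; apply: prodr_ge0 => *; exact: Cf_ge0.
Qed.

Lemma adjE n (E : {set {set 'I_n}}) u v : adj E u v = (u != v) && (edge u v \in E).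
Proof. by []. Qed.

Lemma ind_bound (R : numDomainType) n (E : {set {set 'I_n}}) k a S :
  (proper_star_ksep E k a S)%:R <=
  ((a \notin S) && (#|S| == k))%:R * \sum_(x0 in ~: (a |: S)) Ind R a x0 S E :> R.
Proof.
case hp: (proper_star_ksep E k a S); last first.
  by apply: mulr_ge0 => //; apply: sumr_ge0 => *; apply: Ind_ge0.
move: hp; rewrite /proper_star_ksep /star_sep /is_sep.
move=> /and3P [/andP [SW /and4P [_ _ SnW /forallP hsep]] /eqP cardS _].
set W := ~: star E a in SW SnW hsep.
have hW : forall y, (y \in W) = (y != a) && (edge a y \notin E).
  move=> y; rewrite /W /star !inE adjE negb_or negb_and negbK.
  by case: (y =P a) => [->|/eqP ya] //=; rewrite eq_sym (negbTE ya).
have hS : forall s, s \in S -> (s != a) && (edge a s \notin E).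
  by move=> s sS; rewrite -hW (fintype.subsetP SW).
have aS : a \notin S by apply/negP => /hS; rewrite eqxx.
have [y yW yS] : exists2 y, y \in W & y \notin S.
  apply/fintype.subsetPn; apply: contra SnW => WS; rewrite finset.eqEsubset SW WS.
  by [].
have sep : forall s x, s \in S -> x \in W -> x \notin S -> edge x s \notin E.
  move=> s x sS xW xS; move: (hsep s); rewrite sS /= => /forallP /(_ x).
  rewrite finset.in_setD xS xW /= adjE negb_and negbK.
  case/orP => [/eqP e|]; last by rewrite edge_sym.
  by move: xS; rewrite -e sS.
move: (yW); rewrite hW => /andP [ya yE].
have yT : y \in ~: (a |: S) by rewrite !inE negb_or ya yS.
rewrite aS cardS eqxx mul1r (bigD1 y) //=.
have -> : Ind R a y S E = 1.
  rewrite /Ind big1_seq; last first.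
    by move=> s /andP [_]; rewrite mem_enum => /hS /andP [_ ->].
  rewrite mul1r yE mul1r big1_seq; last first.
    by move=> s /andP [_]; rewrite mem_enum => sS; rewrite sep.
  rewrite mul1r mulr1 big1_seq // => x /andP [_]; rewrite mem_enum.
  rewrite !inE negb_or => /and3P [xy xa xS].
  rewrite /Cf; case: (boolP (edge a x \in E)) => hx /=.
    by rewrite mul0r addr0.
  rewrite add0r mul1r big1 // => s sS; rewrite sep //.
  by rewrite hW xa.
rewrite lerDl; apply: sumr_ge0 => *; exact: Ind_ge0.
Qed.
Lemma count_aS (R : numDomainType) n k :
  \sum_(aS : 'I_n * {set 'I_n}) ((aS.1 \notin aS.2) && (#|aS.2| == k))%:R
  = (n * 'C(n.-1, k))%:R :> R.
Proof.
rewrite -(pair_bigA _ (fun (a : 'I_n) (S : {set 'I_n}) => ((a \notin S) && (#|S| == k))%:R)) /=.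
rewrite (eq_bigr (fun _ => ('C(n.-1, k))%:R)); last first.
  move=> a _.
  rewrite (eq_bigr (fun S => if S \in [set S : {set 'I_n} | S \subset [set~ a] & #|S| == k]
     then 1 else 0)); last first.
    by move=> S _; rewrite inE finset.subsetC finset.sub1set finset.in_setC; case: (_ && _).
  by rewrite -big_mkcond sumr_const cards_draws cardsC1 card_ord.
rewrite sumr_const card_ord.
by rewrite natrM mulr_natl.
Qed.
Lemma Wt_ge0 (R : numDomainType) (T : finType) (p : R) (Q E : {set T}) :
  0 <= p -> p <= 1 -> 0 <= Wt p Q E.
Proof.
move=> p0 p1; apply: prodr_ge0 => e _; case: (_ \in _) => //.
by rewrite subr_ge0.
Qed.

Lemma expect_bound (R : numDomainType) n k (p : R) : 0 <= p -> p <= 1 ->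
  @gnp_expect R n p (fun E => (U k E)%:R) <=
  (n * 'C(n.-1, k))%:R * ((n - k.+1)%:R * ((1 - p) ^+ k * ((1 - p) * ((1 - p) ^+ k *
      ((p + (1 - p) * (1 - p) ^+ k) ^+ (n - k.+1 - 1)))))).
Proof.
move=> p0 p1.
set V := (1 - p) ^+ k * _.
have hU : forall E, (U k E)%:R = \sum_(aS : 'I_n * {set 'I_n})
    (proper_star_ksep E k aS.1 aS.2)%:R :> R.
  move=> E; rewrite /U -sum1_card natr_sum big_mkcond /=.
  by apply: eq_bigr => i _; rewrite inE; case: (proper_star_ksep _ _ _ _).
set c := fun aS : 'I_n * {set 'I_n} => ((aS.1 \notin aS.2) && (#|aS.2| == k))%:R : R.
have step1 : forall E : {set {set 'I_n}}, gnp_prob p E * (U k E)%:R <=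
   \sum_(aS : 'I_n * {set 'I_n}) c aS *
     \sum_(x0 in ~: (aS.1 |: aS.2)) (Wt p (pairs n) E * Ind R aS.1 x0 aS.2 E).
  move=> E; change (gnp_prob p E) with (Wt p (pairs n) E).
  rewrite hU mulr_sumr; apply: ler_sum => aS _.
  rewrite -mulr_sumr mulrCA; apply: ler_wpM2l; first exact: Wt_ge0.
  exact: ind_bound.
rewrite /gnp_expect; apply: le_trans (ler_sum _ (fun E _ => step1 E)) _.
rewrite exchange_big /=.
rewrite (eq_bigr (fun aS => c aS * ((n - k.+1)%:R * V))); last first.
  move=> [a S] _; rewrite -mulr_sumr exchange_big /= /c.
  case: (boolP ((a \notin S) && (#|S| == k))) => [/andP [aS /eqP cardS]|_];
    last by rewrite !mul0r.
  have cardT : #|~: (a |: S)| = (n - k.+1)%N.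
    have h := cardsC (a |: S); rewrite cardsU1 aS cardS card_ord /= in h.
    move: h; set m := #|~: (a |: S)|; move=> h; lia.
  rewrite (eq_bigr (fun _ => V)); last first.
    by move=> x0 x0T; rewrite Ind_sum // cardS cardT /V.
  by rewrite sumr_const cardT; congr (_ * _); rewrite mulr_natl.
by rewrite -big_distrl /= /c count_aS.
Qed.
Lemma binom_le1 (R : realFieldType) (x s : R) n j :
  0 <= x -> 0 <= s -> s + x = 1 -> 'C(n, j)%:R * x ^+ j * s ^+ (n - j) <= 1.
Proof.
move=> x0 s0 hxs.
case: (leqP j n) => hj; last by rewrite bin_small // !mul0r.
have h := exprDn s x n; rewrite hxs expr1n in h.
rewrite [X in _ <= X]h (bigD1 (Ordinal (hj : j < n.+1)%N)) //=.
rewrite -[X in X <= _]addr0; apply: lerD.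
  by rewrite le_eqVlt; apply/orP; left; apply/eqP; rewrite -mulr_natl; ring.
apply: sumr_ge0 => i _; apply: mulrn_wge0; apply: mulr_ge0; exact: exprn_ge0.
Qed.

Lemma natid n k : (n * 'C(n.-1, k) * (n - k.+1) = k.+1 * k.+2 * 'C(n, k.+2))%N.
Proof. by rewrite mul_bin_diag -mulnA [('C(n, k.+1) * _)%N]mulnC -mul_bin_left mulnA. Qed.
Lemma powle (R : realFieldType) (x y : R) n : 0 <= x -> x <= y -> x ^+ n <= y ^+ n.
Proof.
move=> x0 xy; apply: lerXn2r; rewrite ?nnegrE //; exact: le_trans xy.
Qed.

Definition bb (R : realFieldType) (k : nat) : R :=
  (k.+1 * k.+2)%:R * (3/5 : R) ^+ k.-1 / (1 - (3/5 : R) ^+ k) ^+ k.+2.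

Lemma bound_q (R : realFieldType) n k (p : R) : (0 < k)%N -> 2/5 <= p -> p <= 1 ->
  (n * 'C(n.-1, k))%:R * ((n - k.+1)%:R * ((1 - p) ^+ k * ((1 - p) * ((1 - p) ^+ k *
      ((p + (1 - p) * (1 - p) ^+ k) ^+ (n - k.+1 - 1)))))) <= bb R k.
Proof.
case: k => // m _ hp hp1.
set q := 1 - p.
have q0 : 0 <= q by rewrite /q subr_ge0.
have qc : q <= 3/5 by rewrite /q; lra.
have hp' : p = 1 - q by rewrite /q; ring.
set s := p + q * q ^+ m.+1.
set A := 1 - q ^+ m.+1.
set x := q * A.
have sx : s + x = 1 by rewrite /s /x /A hp'; ring.
have qmc : q ^+ m.+1 <= (3/5) ^+ m.+1 by apply: powle.
have cm : (3/5 : R) ^+ m.+1 <= 3/5.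
  by apply: ler_iXnr => //; lra.
have Ac : 1 - (3/5 : R) ^+ m.+1 <= A by rewrite /A; lra.
have Ac0 : 0 < 1 - (3/5 : R) ^+ m.+1 by lra.
have A0 : 0 < A by apply: lt_le_trans Ac.
have x0 : 0 <= x by apply: mulr_ge0 => //; apply: ltW.
have s0 : 0 <= s.
  rewrite /s; apply: addr_ge0; first lra.
  by apply: mulr_ge0 => //; apply: exprn_ge0.
have hb := binom_le1 n m.+3 x0 s0 sx.
rewrite mulrA -natrM natid natrM.
rewrite (_ : (n - m.+2 - 1)%N = (n - m.+3)%N); last by lia.
set N := (n - m.+3)%N in hb *.
set C := ('C(n, m.+3))%:R in hb *.
have e2 : C * q ^+ m.+3 * s ^+ N <= 1 / A ^+ m.+3.
  rewrite ler_pdivlMr; last by apply: exprn_gt0.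
  have -> : C * q ^+ m.+3 * s ^+ N * A ^+ m.+3 = C * x ^+ m.+3 * s ^+ N.
    by rewrite /x exprMn; ring.
  exact: hb.
have e1 : (m.+2 * m.+3)%:R * C * (q ^+ m.+1 * (q * (q ^+ m.+1 * s ^+ N))) =
   (m.+2 * m.+3)%:R * q ^+ m * (C * q ^+ m.+3 * s ^+ N).
  by rewrite !exprS; ring.
rewrite e1 /bb.
have K0 : 0 <= (m.+2 * m.+3)%:R :> R by [].
apply: (@le_trans _ _ ((m.+2 * m.+3)%:R * q ^+ m * (1 / A ^+ m.+3))).
  apply: ler_wpM2l => //; apply: mulr_ge0 => //; exact: exprn_ge0.
rewrite mul1r; apply: ler_pM.
- by apply: mulr_ge0 => //; apply: exprn_ge0.
- by rewrite invr_ge0; apply: exprn_ge0; apply: ltW.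
- by apply: ler_wpM2l => //; apply: powle.
rewrite lef_pV2 ?posrE ?exprn_gt0 //.
by apply: powle => //; apply: ltW.
Qed.
Lemma bb_ge0 (R : realFieldType) k : 0 <= bb R k.
Proof.
rewrite /bb; apply: mulr_ge0; first by apply: mulr_ge0 => //; apply: exprn_ge0; lra.
rewrite invr_ge0; apply: exprn_ge0; rewrite subr_ge0; apply: exprn_ile1; lra.
Qed.

Lemma bb_step (R : realFieldType) m : (3 <= m)%N ->
  bb R m.+2 <= 19/20 * bb R m.+1.
Proof.
move=> m3; rewrite /bb /=.
set c : R := 3/5.
set P := c ^+ m.
set A := 1 - c ^+ m.+1.
set B := 1 - c ^+ m.+2.
have cP : c ^+ m.+1 = c * P by rewrite exprS.
have cP2 : c ^+ m.+2 = c * (c * P) by rewrite !exprS.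
have P0 : 0 <= P by apply: exprn_ge0; rewrite /c; lra.
have P5 : P <= c ^+ 3 by apply: ler_wiXn2l => //; rewrite /c; lra.
have c3 : c ^+ 3 = 27/125 by rewrite /c !exprS expr0; lra.
have AB : A <= B by rewrite /A /B cP cP2 /c; nra.
have A0 : 0 < A by rewrite /A cP /c; nra.
have B0 : 0 < B by apply: lt_le_trans AB.
have M3 : 3 <= m%:R :> R by rewrite ler_nat.
have key : (m%:R + 4) * c <= 19/20 * ((m%:R + 2) * B).
  have B5 : 2882/3125 <= B by rewrite /B cP2 /c; nra.
  rewrite /c; nra.
rewrite ler_pdivrMr; last by apply: exprn_gt0.
rewrite (exprS B) mulrA.
set X2 := (m.+2 * m.+3)%:R * P.
apply: (@le_trans _ _ (19/20 * X2 * B)).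
  have n2 : (m.+2)%:R = m%:R + 2 :> R by rewrite -addn2 natrD.
  have n3 : (m.+3)%:R = m%:R + 3 :> R by rewrite -addn3 natrD.
  have n4 : (m.+4)%:R = m%:R + 4 :> R by rewrite -addn4 natrD.
  rewrite /X2 cP !natrM n2 n3 n4.
  have h : ((m%:R + 3) * P) * ((m%:R + 4) * c) <= ((m%:R + 3) * P) * (19/20 * ((m%:R + 2) * B)).
    by apply: ler_wpM2l => //; apply: mulr_ge0 => //; lra.
  move: h; nra.
have -> : 19 / 20 * (X2 / A ^+ m.+3) * B * B ^+ m.+3 =
   (19/20 * X2 * B) * (B ^+ m.+3 / A ^+ m.+3) by ring.
apply: ler_peMr.
  apply: mulr_ge0; last exact: ltW.
  by apply: mulr_ge0; [lra | apply: mulr_ge0].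
rewrite ler_pdivlMr ?mul1r; last by apply: exprn_gt0.
by apply: powle => //; apply: ltW.
Qed.
Definition KK (R : realFieldType) : R :=
  (bb R 1 + bb R 2 + bb R 3 + bb R 4) * (20/19) ^+ 4.

Lemma bb_tail (R : realFieldType) i : bb R i.+4 <= bb R 4 * (19/20) ^+ i.
Proof.
elim: i => [|i IH]; first by rewrite expr0 mulr1.
apply: le_trans (bb_step R (m := i.+3) _) _ => //.
rewrite exprS (mulrCA (bb R 4)); apply: ler_wpM2l => //; lra.
Qed.

Lemma bb_le (R : realFieldType) k : (0 < k)%N -> bb R k <= KK R * (19/20) ^+ k.
Proof.
move=> k0.
have h1 := bb_ge0 R 1; have h2 := bb_ge0 R 2; have h3 := bb_ge0 R 3; have h4 := bb_ge0 R 4.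
set S := bb R 1 + bb R 2 + bb R 3 + bb R 4.
have S0 : 0 <= S by rewrite /S; lra.
rewrite /KK -/S -mulrA.
have small : forall j, (j <= 4)%N -> bb R j <= S -> bb R j <= S * ((20/19) ^+ 4 * (19/20) ^+ j).
  move=> j j4 hj; apply: le_trans hj _; apply: ler_peMr => //.
  have -> : (20/19 : R) ^+ 4 = ((19/20) ^+ 4)^-1.
    by rewrite -exprVn; congr (_ ^+ _); rewrite invf_div.
  rewrite mulrC ler_pdivlMr ?mul1r; last by apply: exprn_gt0; lra.
  by apply: ler_wiXn2l => //; lra.
case: k k0 => [//|[|[|[|[|i]]]]] _.
- by apply: small => //; rewrite /S; lra.
- by apply: small => //; rewrite /S; lra.
- by apply: small => //; rewrite /S; lra.
- by apply: small => //; rewrite /S; lra.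
apply: le_trans (bb_tail R i.+1) _.
have -> : (19/20 : R) ^+ i.+1.+4 = (19/20) ^+ 4 * (19/20) ^+ i.+1 by rewrite -exprD.
have e : (20/19 : R) ^+ 4 * (19/20) ^+ 4 = 1.
  by rewrite -exprMn (_ : 20/19 * (19/20) = 1 :> R) ?expr1n //; lra.
rewrite (mulrA ((20/19) ^+ 4)) e mul1r; apply: ler_wpM2r; first by apply: exprn_ge0; lra.
by rewrite /S; lra.
Qed.
Unset Implicit Arguments.
Local Open Scope classical_set_scope.

Theorem proposition3p4 (R : realType) :
  exists a : nat -> R,
    (forall k : nat, (0 < k)%N -> 0 < a k) /\
    cvgn (series (fun k => a k.+1)) /\
    (forall (k n : nat) (p : R), (0 < k)%N -> (2 * k <= n)%N ->
       2 / 5 <= p -> p <= 1 ->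
       @gnp_expect R n p (fun E => (U k E)%:R) <= a k).
Proof.
exists (fun k => KK R * (19/20 : R) ^+ k).
have KK0 : 0 < KK R.
  have b1 : 0 < bb R 1.
    rewrite /bb /= expr0 mulr1; apply: divr_gt0 => //; apply: exprn_gt0; lra.
  have h2 := bb_ge0 R 2; have h3 := bb_ge0 R 3; have h4 := bb_ge0 R 4.
  rewrite /KK; apply: mulr_gt0; last by apply: exprn_gt0; lra.
  lra.
split; [|split].
- by move=> k _; apply: mulr_gt0 => //; apply: exprn_gt0; lra.
- have -> : (fun k => KK R * (19/20 : R) ^+ k.+1) = geometric (KK R * (19/20)) (19/20).
    by apply/funext => k /=; rewrite exprS mulrA.
  apply: is_cvg_geometric_series.
  by rewrite ger0_norm; lra.
- move=> k n p k0 _ hp hp1.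
  apply: le_trans (expect_bound n k (p:=p) _ _) _; [lra | lra |].
  exact: le_trans (bound_q n k0 hp hp1) (bb_le R k0).
Qed.
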